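(* For every finite simple graph $G$, $$\alpha_{\mathcal S}(G)=\inf_A\min\big\{W_A(x)\ \big|\ \lambda_{\min}(A)^{-1}\le x\le\lambda_{\max}(A)^{-1}\big\},$$ the infimum taken over all real symmetric weighted adjacency matrices $A$ of $G$.
   Context: $G$ has vertex set $\{1,\dots,n\}$. A weighted adjacency matrix is a real symmetric $A$ with $A_{ii}=0$ and $A_{ij}=0$ for non-adjacent $i\ne j$. $\mathcal S_n=\{\boldsymbol v\in\mathbb R^n:\langle\boldsymbol 1,\boldsymbol v\rangle=|\boldsymbol v|^2\}$ ($\boldsymbol 1$ the all-ones vector), and $\alpha_{\mathcal S}(G)=\inf_A\sup\{|\boldsymbol v|^2:\boldsymbol v\in\mathcal S_n,\ \langle\boldsymbol v,A\boldsymbol v\rangle=0\}$. For $A=\sum_{\lambda\in\sigma(A)}\lambda P_\lambda$, $W_A(x)=\sum_{\lambda\in\sigma(A)}\frac{\langle\boldsymbol 1,P_\lambda\boldsymbol 1\rangle}{1-\lambda x}$, terms with $\langle\boldsymbol 1,P_\lambda\boldsymbol 1\rangle=0$ omitted, and value $+\infty$ at a pole. $\lambda_{\min}(A),\lambda_{\max}(A)$ are the extreme eigenvalues; for $A=0$ the inner minimum is taken to equal $n$. *)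

(* Defs.v *)
From HB Require Import structures.
From mathcomp Require Import all_boot all_order all_algebra.
From mathcomp Require Import all_classical all_reals all_analysis.
Set Implicit Arguments. Unset Strict Implicit. Unset Printing Implicit Defensive.
Import Order.TTheory GRing.Theory Num.Theory.
Local Open Scope classical_set_scope.
Local Open Scope ring_scope.

Definition simple_graph (n : nat) (adj : rel 'I_n) : Prop :=
  symmetric adj /\ irreflexive adj.

Definition weighted_adj (R : realType) (n : nat) (adj : rel 'I_n) (A : 'M[R]_n) : Prop :=
  A^T = A /\ (forall i, A i i = 0) /\ (forall i j, i != j -> ~~ adj i j -> A i j = 0).

Definition dotv (R : realType) (n : nat) (u v : 'rV[R]_n) : R := (u *m v^T) 0 0.
Definition onev (R : realType) (n : nat) : 'rV[R]_n := const_mx 1.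
Arguments onev {R n}.

Definition S_set (R : realType) (n : nat) : set 'rV[R]_n :=
  [set v | dotv onev v = dotv v v].
Arguments S_set {R n}.

Definition quadf (R : realType) (n : nat) (A : 'M[R]_n) (v : 'rV[R]_n) : R :=
  dotv v (v *m A^T).

Definition alpha_S (R : realType) (n : nat) (adj : rel 'I_n) : \bar R :=
  ereal_inf [set ereal_sup [set (dotv v v)%:E | v in
                [set v | S_set v /\ quadf A v = 0]]
            | A in [set A : 'M[R]_n | weighted_adj adj A]].

Definition spectrum (R : realType) (n : nat) (A : 'M[R]_n) : set R :=
  [set l | eigenvalue A l].

(* P_lambda: the orthogonal projection onto the eigenspace ker(A - lambda I);
   with B a basis (as rows) of the eigenspace, P = B^T (B B^T)^{-1} B. *)
Definition eigenproj (R : realType) (n : nat) (A : 'M[R]_n) (l : R) : 'M[R]_n :=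
  let B := row_base (eigenspace A l) in B^T *m invmx (B *m B^T) *m B.

Definition wcoef (R : realType) (n : nat) (A : 'M[R]_n) (l : R) : R :=
  dotv onev (onev *m (eigenproj A l)^T).

Definition W_A (R : realType) (n : nat) (A : 'M[R]_n) (x : R) : \bar R :=
  if pselect (exists l, spectrum A l /\ wcoef A l != 0 /\ 1 - l * x = 0)
  then +oo%E
  else (\sum_(l \in [set l | spectrum A l /\ wcoef A l != 0])
          (wcoef A l / (1 - l * x)))%:E.

Definition lam_min (R : realType) (n : nat) (A : 'M[R]_n) : R := inf (spectrum A).
Definition lam_max (R : realType) (n : nat) (A : 'M[R]_n) : R := sup (spectrum A).

Definition inner_min (R : realType) (n : nat) (A : 'M[R]_n) : \bar R :=
  if A == 0 then (n%:R)%:E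
  else ereal_inf [set W_A A x | x in [set x | (lam_min A)^-1 <= x <= (lam_max A)^-1]].

(* Main.v *)
Require Import Defs.
From HB Require Import structures.
From mathcomp Require Import all_boot all_order all_algebra.
From mathcomp Require Import all_classical all_reals all_analysis.
From mathcomp Require Import complex polyrcf ring lra.
Set Implicit Arguments. Unset Strict Implicit. Unset Printing Implicit Defensive.
Import Order.TTheory GRing.Theory Num.Theory.
Local Open Scope ring_scope.
Notation cRe := (@complex.Re _).
Notation cIm := (@complex.Im _).
Section S.
Variable R : rcfType.
Lemma Re_sum k (f : 'I_k -> R[i]) : cRe (\sum_i f i) = \sum_i cRe (f i).
Proof. by apply: (big_morph (@complex.Re R)) => // -[a b] [c d]. Qed.
Lemma Im_sum k (f : 'I_k -> R[i]) : cIm (\sum_i f i) = \sum_i cIm (f i).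
Proof. by apply: (big_morph (@complex.Im R)) => // -[a b] [c d]. Qed.
Lemma Re_mulr (z : R[i]) (b : R) : cRe (z * (b%:C)%C) = cRe z * b.
Proof. by case: z => x y /=; rewrite mulr0 subr0. Qed.
Lemma Im_mulr (z : R[i]) (b : R) : cIm (z * (b%:C)%C) = cIm z * b.
Proof. by case: z => x y /=; rewrite mulr0 add0r. Qed.
Lemma Re_mul (z w : R[i]) : cRe (z * w) = cRe z * cRe w - cIm z * cIm w.
Proof. by case: z => x y; case: w. Qed.
Lemma Im_mul (z w : R[i]) : cIm (z * w) = cRe z * cIm w + cIm z * cRe w.
Proof. by case: z => x y; case: w. Qed.

Definition dv n (u v : 'rV[R]_n) : R := (u *m v^T) 0 0.

Lemma dvC n (u v : 'rV[R]_n) : dv u v = dv v u.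
Proof. by rewrite /dv (_ : u *m v^T = (v *m u^T)^T) ?mxE // trmx_mul trmxK. Qed.

Lemma dv_ge0 n (u : 'rV[R]_n) : 0 <= dv u u.
Proof.
by rewrite /dv mxE; apply: sumr_ge0 => i _; rewrite mxE -expr2 sqr_ge0.
Qed.

Lemma mxtr_eq0 m n (X : 'M[R]_(m, n)) : X *m X^T = 0 -> X = 0.
Proof.
move=> H; apply/matrixP => i j; rewrite mxE.
have /matrixP /(_ i i) := H; rewrite !mxE => /eqP; rewrite psumr_eq0.
  by move=> /allP /(_ j) ; rewrite mem_index_enum mxE -expr2 sqrf_eq0 => /(_ isT) /eqP.
by move=> k _; rewrite mxE -expr2 sqr_ge0.
Qed.

Lemma dv_eq0 n (u : 'rV[R]_n) : dv u u = 0 -> u = 0.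
Proof.
move=> H; apply: mxtr_eq0; apply/matrixP => i j; rewrite !ord1 [RHS]mxE; exact: H.
Qed.

Lemma dv_gt0 n (u : 'rV[R]_n) : u != 0 -> 0 < dv u u.
Proof.
by move=> un0; rewrite lt_def dv_ge0 andbT; apply: contra un0 => /eqP/dv_eq0 ->.
Qed.

Lemma eig_orth n (A : 'M[R]_n) l m p q (X : 'M[R]_(p, n)) (Y : 'M[R]_(q, n)) :
  A^T = A -> l != m -> (X <= eigenspace A l)%MS -> (Y <= eigenspace A m)%MS ->
  X *m Y^T = 0.
Proof.
move=> sA lm /eigenspaceP XA /eigenspaceP YA.
have : X *m A *m Y^T = l *: (X *m Y^T) by rewrite XA scalemxAl.
rewrite -mulmxA -{1}sA -trmx_mul YA linearZ /= -scalemxAr => /eqP.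
rewrite -subr_eq0 -scalerBl scaler_eq0 subr_eq0 eq_sym (negbTE lm) /=.
by move/eqP.
Qed.

Definition Pr k n (B : 'M[R]_(k, n)) : 'M[R]_n := B^T *m invmx (B *m B^T) *m B.

Lemma gram_unit k n (B : 'M[R]_(k, n)) : row_free B -> B *m B^T \in unitmx.
Proof.
move=> fB; rewrite unitmxE unitfE; apply/negP => /det0P [v vn0 vG].
have : (v *m B) *m (v *m B)^T = 0.
  by rewrite trmx_mul mulmxA -(mulmxA v) vG mul0mx.
move/mxtr_eq0/eqP; rewrite mulmx_free_eq0 // => /eqP v0.
by rewrite v0 eqxx in vn0.
Qed.

Lemma Pr_tr k n (B : 'M[R]_(k, n)) : (Pr B)^T = Pr B.
Proof.
by rewrite /Pr !trmx_mul trmxK trmx_inv trmx_mul trmxK mulmxA.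
Qed.

Lemma Pr_id k n (B : 'M[R]_(k, n)) p (X : 'M[R]_(p, n)) : row_free B ->
  (X <= B)%MS -> X *m Pr B = X.
Proof.
move=> fB /submxP [D ->]; rewrite /Pr !mulmxA -(mulmxA D) -(mulmxA D).
by rewrite mulmxV ?gram_unit // mulmx1.
Qed.

Lemma Pr_orth k n (B : 'M[R]_(k, n)) p (X : 'M[R]_(p, n)) :
  X *m B^T = 0 -> X *m Pr B = 0.
Proof. by move=> H; rewrite /Pr !mulmxA H !mul0mx. Qed.

Lemma Pr_sub k n (B : 'M[R]_(k, n)) : (Pr B <= B)%MS.
Proof. exact: submxMl. Qed.

Definition eproj n (A : 'M[R]_n) (l : R) : 'M[R]_n :=
  let B := row_base (eigenspace A l) in B^T *m invmx (B *m B^T) *m B.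

Lemma eprojE n (A : 'M[R]_n) l : eproj A l = Pr (row_base (eigenspace A l)).
Proof. by []. Qed.


Lemma dvDl n (u v w : 'rV[R]_n) : dv (u + v) w = dv u w + dv v w.
Proof. by rewrite /dv mulmxDl [LHS]mxE. Qed.
Lemma dvZl n a (u w : 'rV[R]_n) : dv (a *: u) w = a * dv u w.
Proof. by rewrite /dv -scalemxAl [LHS]mxE. Qed.
Lemma dvNl n (u w : 'rV[R]_n) : dv (- u) w = - dv u w.
Proof. by rewrite /dv mulNmx [LHS]mxE. Qed.
Lemma dvBl n (u v w : 'rV[R]_n) : dv (u - v) w = dv u w - dv v w.
Proof. by rewrite dvDl dvNl. Qed.
Lemma dv_sym n (A : 'M[R]_n) (u v : 'rV[R]_n) : A^T = A -> dv (u *m A) v = dv (v *m A) u.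
Proof. by move=> sA; rewrite dvC /dv trmx_mul sA mulmxA. Qed.

Lemma real_eigvec n (A : 'M[R]_n) m (K : 'M[R]_(m, n)) :
  A^T = A -> (0 < \rank K)%N -> (K *m A <= K)%MS ->
  exists2 x : 'rV_n, x != 0 & (x <= K)%MS /\ exists a, x *m A = a *: x.
Proof.
move=> sA rK KA.
set Rb := row_base K.
have RbK : (Rb <= K)%MS by rewrite eq_row_base.
have RA : (Rb *m A <= Rb)%MS.
  by rewrite eq_row_base (submx_trans _ KA) // submxMr.
set B := Rb *m A *m pinvmx Rb.
have BR : B *m Rb = Rb *m A by rewrite mulmxKpV.
pose BC := map_mx (real_complex R) B.
have [lam /eigenvalueP [y yB yn0]] := eigenvalue_closed BC rK.
pose y1 := map_mx cRe y; pose y2 := map_mx cIm y.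
have k1 : y1 *m B = cRe lam *: y1 - cIm lam *: y2.
  apply/rowP => j; have /rowP /(_ j) /(congr1 cRe) := yB.
  rewrite !mxE Re_sum => H.
  transitivity (cRe (lam * y 0 j)); last by rewrite Re_mul.
  by rewrite -H; apply: eq_bigr => i _; rewrite !mxE Re_mulr.
have k2 : y2 *m B = cIm lam *: y1 + cRe lam *: y2.
  apply/rowP => j; have /rowP /(_ j) /(congr1 cIm) := yB.
  rewrite !mxE Im_sum => H.
  transitivity (cIm (lam * y 0 j)); last by rewrite Im_mul addrC.
  by rewrite -H; apply: eq_bigr => i _; rewrite !mxE Im_mulr.
pose x1 := y1 *m Rb; pose x2 := y2 *m Rb.
have e1 : x1 *m A = cRe lam *: x1 - cIm lam *: x2.
  by rewrite /x1 -mulmxA -BR mulmxA k1 mulmxBl -!scalemxAl.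
have e2 : x2 *m A = cIm lam *: x1 + cRe lam *: x2.
  by rewrite /x2 -mulmxA -BR mulmxA k2 mulmxDl -!scalemxAl.
have fRb : row_free Rb := row_base_free K.
have y12 : (y1 != 0) || (y2 != 0).
  apply: contraR yn0; rewrite negb_or !negbK => /andP [/eqP h1 /eqP h2].
  apply/eqP/rowP => j; have /rowP /(_ j) := h1; have /rowP /(_ j) := h2.
  by rewrite !mxE; case: (y 0 j) => a b /= -> ->.
have beta0 : cIm lam = 0.
  have := dv_sym x1 x2 sA; rewrite e1 e2 dvBl dvDl !dvZl (dvC x2 x1) => E.
  have /eqP : cIm lam * (dv x1 x1 + dv x2 x2) = 0.
    move: E; set a := cRe lam; set b := cIm lam; set d11 := dv x1 x1;
    set d12 := dv x1 x2; set d22 := dv x2 x2 => E.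
    have -> : b * (d11 + d22) = (b * d11 + a * d12) - (a * d12 - b * d22) by ring.
    by rewrite E subrr.
  rewrite mulf_eq0 => /orP [/eqP //|].
  have : 0 < dv x1 x1 + dv x2 x2.
    case/orP: y12 => h.
      by apply: ltr_pwDl; [apply: dv_gt0; rewrite mulmx_free_eq0 | apply: dv_ge0].
    by apply: ltr_pwDr; [apply: dv_gt0; rewrite mulmx_free_eq0 | apply: dv_ge0].
  by rewrite lt_def => /andP [/negbTE ->].
case/orP: y12 => h.
  exists x1; first by rewrite mulmx_free_eq0.
  split; first exact: submx_trans (submxMl _ _) RbK.
  by exists (cRe lam); rewrite e1 beta0 scale0r subr0.
exists x2; first by rewrite mulmx_free_eq0.
split; first exact: submx_trans (submxMl _ _) RbK.
by exists (cRe lam); rewrite e2 beta0 scale0r add0r.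
Qed.


Section Decomp.
Variables (n : nat) (A : 'M[R]_n).
Hypothesis sA : A^T = A.

Definition spec := rootsR (char_poly A).
Definition ev (i : 'I_(size spec)) : R := spec`_i.
Definition EE i := eigenspace A (ev i).
Definition PP i := eproj A (ev i).

Lemma spec_uniq : uniq spec.
Proof. exact: uniq_roots. Qed.

Lemma mem_spec l : (l \in spec) = eigenvalue A l.
Proof.
rewrite eigenvalue_root_char.
by have := roots_on_rootsR (monic_neq0 (char_poly_monic A)) l; rewrite in_itv /= => <-.
Qed.

Lemma ev_inj i j : (ev i == ev j) = (i == j).
Proof. by rewrite /ev nth_uniq // spec_uniq. Qed.

Lemma ev_eig i : eigenvalue A (ev i).
Proof. by rewrite -mem_spec mem_nth. Qed.

Lemma eig_ev l : eigenvalue A l -> exists i, l = ev i.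
Proof.
rewrite -mem_spec => ls.
have hi : (index l spec < size spec)%N by rewrite index_mem.
by exists (Ordinal hi); rewrite /ev /= nth_index.
Qed.

Lemma PP_sub i : (PP i <= EE i)%MS.
Proof. by rewrite /PP eprojE; apply: submx_trans (Pr_sub _) _; rewrite eq_row_base. Qed.

Lemma PP_tr i : (PP i)^T = PP i.
Proof. exact: Pr_tr. Qed.

Lemma PP_id i p (X : 'M[R]_(p, n)) : (X <= EE i)%MS -> X *m PP i = X.
Proof. by move=> XE; rewrite /PP eprojE Pr_id ?row_base_free // eq_row_base. Qed.

Lemma PP_orth i j p (X : 'M[R]_(p, n)) : i != j -> (X <= EE i)%MS -> X *m PP j = 0.
Proof.
move=> ij XE; rewrite /PP eprojE Pr_orth //.
have hY : (row_base (EE j) <= EE j)%MS by rewrite eq_row_base.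
have hl : ev i != ev j by rewrite ev_inj.
exact: (eig_orth sA hl XE hY).
Qed.

Lemma PP_mul i j : PP i *m PP j = if i == j then PP i else 0.
Proof.
case: eqP => [<-|/eqP ij]; first exact: PP_id (PP_sub i).
exact: PP_orth ij (PP_sub i).
Qed.

Lemma PP_A i : PP i *m A = ev i *: PP i.
Proof. by apply/eigenspaceP; exact: PP_sub. Qed.

Lemma A_PP i : A *m PP i = ev i *: PP i.
Proof. by rewrite -[LHS]trmxK trmx_mul PP_tr sA PP_A linearZ /= PP_tr. Qed.

Lemma full_eig : (1%:M <= \sum_i EE i)%MS.
Proof.
set W := (\sum_i EE i)%MS.
have [fW|nfW] := boolP (row_full W); first exact: submx_full.
exfalso; set K := kermx W^T.
have rK : (0 < \rank K)%N.
  rewrite mxrank_ker mxrank_tr subn_gt0 ltn_neqAle rank_leq_col andbT.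
  exact: nfW.
have WA : (W *m A <= W)%MS.
  rewrite (sumsmxMr _ _ A); apply: sumsmxS => i _.
  by rewrite (eigenspaceP (submx_refl (EE i))) scalemx_sub.
have [D WD] := submxP WA.
have KA : (K *m A <= K)%MS.
  rewrite sub_kermx -mulmxA -{1}sA -trmx_mul WD trmx_mul mulmxA mulmx_ker.
  by rewrite mul0mx.
have [x xn0 [xK [a xA]]] := real_eigvec sA rK KA.
have [i ai] : exists i, a = ev i.
  by apply: eig_ev; apply/eigenvalueP; exists x.
have xW : (x <= W)%MS.
  by apply: (sumsmx_sup i) => //; apply/eigenspaceP; rewrite -ai.
have [c xc] := submxP xK.
have [d xd] := submxP xW.
have : x *m x^T = 0.
  by rewrite {2}xd trmx_mul {1}xc mulmxA -(mulmxA c) mulmx_ker mulmx0 mul0mx.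
by move/mxtr_eq0 => x0; rewrite x0 eqxx in xn0.
Qed.

Lemma PP_sum : \sum_i PP i = 1%:M.
Proof.
have /sub_sumsmxP [u ue] := full_eig.
rewrite -[LHS]mul1mx {1}ue mulmx_suml.
transitivity (\sum_i u i *m EE i); last by rewrite -ue.
apply: eq_bigr => i _; rewrite mulmx_sumr (bigD1 i) //= big1 ?addr0.
  exact: PP_id (submxMl _ _).
by move=> j ji; apply: PP_orth (submxMl _ _); rewrite eq_sym.
Qed.

End Decomp.
End S.


Section Opt.
Variable R : rcfType.
Variables (n : nat) (A : 'M[R]_n).
Hypothesis sA : A^T = A.
Local Notation r := (size (spec A)).

Definition one : 'rV[R]_n := const_mx 1.
Definition q (i : 'I_r) := one *m PP i.
Definition w (i : 'I_r) := dv one (q i).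
Definition c x (i : 'I_r) := (1 - ev i * x)^-1.
Definition zz x := \sum_i c x i *: q i.
Definition ff x := \sum_i w i * c x i.
Definition hh x := \sum_i ev i * w i * (c x i)^+2.
Definition fin x := forall i, w i != 0 -> 1 - ev i * x != 0.
Definition MM x : 'M[R]_n := 1%:M - x *: A.

Lemma dvDr (u v v' : 'rV[R]_n) : dv u (v + v') = dv u v + dv u v'.
Proof. by rewrite dvC dvDl !(dvC _ u). Qed.
Lemma dvZr a (u v : 'rV[R]_n) : dv u (a *: v) = a * dv u v.
Proof. by rewrite dvC dvZl dvC. Qed.
Lemma dvBr (u v v' : 'rV[R]_n) : dv u (v - v') = dv u v - dv u v'.
Proof. by rewrite dvC dvBl !(dvC _ u). Qed.
Lemma dv0l (u : 'rV[R]_n) : dv 0 u = 0.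
Proof. by rewrite /dv mul0mx mxE. Qed.
Lemma dv0r (u : 'rV[R]_n) : dv u 0 = 0.
Proof. by rewrite dvC dv0l. Qed.
Lemma dv_suml I (s : seq I) (F : I -> 'rV[R]_n) v :
  dv (\sum_(i <- s) F i) v = \sum_(i <- s) dv (F i) v.
Proof. by apply: (big_morph (fun u => dv u v)) => [x y|]; rewrite ?dvDl ?dv0l. Qed.
Lemma dv_sumr I (s : seq I) (F : I -> 'rV[R]_n) v :
  dv v (\sum_(i <- s) F i) = \sum_(i <- s) dv v (F i).
Proof. by rewrite dvC dv_suml; apply: eq_bigr => i _; rewrite dvC. Qed.

Lemma dvPP (u v : 'rV[R]_n) (i j : 'I_r) : dv (u *m PP i) (v *m PP j) = if i == j then dv (u *m PP i) v else 0.
Proof.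
rewrite /dv trmx_mul PP_tr mulmxA -(mulmxA u) (PP_mul sA).
by case: eqP => _ //; rewrite mulmx0 mul0mx mxE.
Qed.

Lemma dvPPs (u v : 'rV[R]_n) (i : 'I_r) : dv (u *m PP i) v = dv u (v *m PP i).
Proof. by rewrite /dv trmx_mul PP_tr -mulmxA. Qed.

Lemma wE i : w i = dv (q i) (q i).
Proof. by rewrite /w /q dvPP eqxx dvC. Qed.

Lemma w_ge0 i : 0 <= w i.
Proof. by rewrite wE dv_ge0. Qed.

Lemma w0q i : w i = 0 -> q i = 0.
Proof. by rewrite wE; apply: dv_eq0. Qed.

Lemma one_sum : one = \sum_i q i.
Proof. by rewrite /q -mulmx_sumr PP_sum // mulmx1. Qed.

Lemma MM_tr x : (MM x)^T = MM x.
Proof. by rewrite /MM linearB /= trmx1 linearZ /= sA. Qed.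

Lemma dvMM (u v : 'rV[R]_n) x : dv (u *m MM x) v = dv u v - x * dv (u *m A) v.
Proof. by rewrite /MM mulmxBr mulmx1 -scalemxAr dvBl dvZl. Qed.

Lemma A_sum : A = \sum_(i < r) ev i *: PP i.
Proof.
rewrite -{1}(mulmx1 A) -(PP_sum sA) mulmx_sumr.
by apply: eq_bigr => i _; rewrite A_PP.
Qed.

Lemma MM_sum x : MM x = \sum_(i < r) (1 - ev i * x) *: PP i.
Proof.
rewrite /MM [X in _ - x *: X]A_sum -(PP_sum sA) scaler_sumr -sumrB.
by apply: eq_bigr => i _; rewrite scalerA scalerBl scale1r mulrC.
Qed.

Lemma dvA_sum (u : 'rV[R]_n) : dv (u *m A) u = \sum_(i < r) ev i * dv (u *m PP i) (u *m PP i).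
Proof.
rewrite -{1}[A]mulmx1 -(PP_sum sA) mulmx_sumr mulmx_sumr dv_suml.
apply: eq_bigr => i _; rewrite A_PP // -scalemxAr dvZl; congr (_ * _).
by rewrite dvPP eqxx.
Qed.

Lemma dv_sum (u : 'rV[R]_n) : dv u u = \sum_(i < r) dv (u *m PP i) (u *m PP i).
Proof.
rewrite -{1}[u]mulmx1 -(PP_sum sA) mulmx_sumr dv_suml.
by apply: eq_bigr => i _; rewrite dvPP eqxx.
Qed.

Lemma MM_psd x (y : 'rV[R]_n) : (forall i : 'I_r, 0 <= 1 - ev i * x) -> 0 <= dv (y *m MM x) y.
Proof.
move=> H; rewrite MM_sum mulmx_sumr dv_suml; apply: sumr_ge0 => i _.
rewrite -scalemxAr dvZl; apply: mulr_ge0 => //.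
by have := dvPP y y i i; rewrite eqxx => <-; exact: dv_ge0.
Qed.


Lemma qA i : q i *m A = ev i *: q i.
Proof. by rewrite /q -mulmxA PP_A -scalemxAr. Qed.

Lemma zzM x : fin x -> zz x *m MM x = one.
Proof.
move=> fx; rewrite /zz mulmx_suml one_sum; apply: eq_bigr => i _.
rewrite -scalemxAl /MM mulmxBr mulmx1 -scalemxAr qA scalerA.
rewrite -{1}(scale1r (q i)) -scalerBl scalerA.
have [w0|wn0] := eqVneq (w i) 0; first by rewrite w0q // scaler0.
by rewrite /c (mulrC x) mulVf ?scale1r // fx.
Qed.

Lemma dv_one_zz x : dv one (zz x) = ff x.
Proof.
rewrite /zz dv_sumr /ff; apply: eq_bigr => i _.
by rewrite dvZr mulrC.
Qed.

Lemma dvqq i j : dv (q i) (q j) = if i == j then w i else 0.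
Proof. by rewrite /q dvPP; case: eqP => // ->; rewrite dvC. Qed.

Lemma dv_zzA x : dv (zz x *m A) (zz x) = hh x.
Proof.
rewrite /zz mulmx_suml dv_suml /hh; apply: eq_bigr => i _.
rewrite dv_sumr (bigD1 i) //= big1 ?addr0.
  by rewrite -scalemxAl qA dvZl dvZr dvZl dvqq eqxx; ring.
by move=> j ji; rewrite -scalemxAl qA dvZl dvZr dvZl dvqq eq_sym (negbTE ji) !mulr0.
Qed.

Lemma weak x : (forall i : 'I_r, 0 <= 1 - ev i * x) -> fin x ->
  forall v, dv one v = dv v v -> dv (v *m A) v = 0 -> dv v v <= ff x.
Proof.
move=> psd fx v Sv Qv.
have := MM_psd (v - zz x) psd.
rewrite mulmxBl zzM // dvBl !dvBr dvMM Qv mulr0 subr0.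
rewrite (dv_sym _ _ (MM_tr x)) zzM // dv_one_zz -Sv.
move: (dv one v) => a; lra.
Qed.

Lemma strong_int x : fin x -> hh x = 0 ->
  exists v, [/\ dv one v = dv v v, dv (v *m A) v = 0 & dv v v = ff x].
Proof.
move=> fx h0; exists (zz x); rewrite dv_zzA h0.
have e : dv one (zz x) = dv (zz x) (zz x).
  by rewrite -{1}(zzM fx) dvMM dv_zzA h0 mulr0 subr0.
by split => //; rewrite -e dv_one_zz.
Qed.


Lemma endpoint i0 x0 : w i0 = 0 -> 1 - ev i0 * x0 = 0 -> fin x0 -> ev i0 * hh x0 <= 0 ->
  exists v, [/\ dv one v = dv v v, dv (v *m A) v = 0 & dv v v = ff x0].
Proof.
move=> w0 e0 fx hneg.
have evn0 : ev i0 != 0.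
  by apply/eqP => h; move: e0; rewrite h mul0r subr0 => /eqP; rewrite oner_eq0.
have /eigenvalueP [e eA en0] := ev_eig i0.
have eE : (e <= EE i0)%MS by apply/eigenspaceP.
have eq0 : forall i, dv e (q i) = 0.
  move=> i; case: (eqVneq i0 i) => [<-|ii0]; first by rewrite w0q // dv0r.
  by rewrite /q -dvPPs (PP_orth sA ii0 eE) dv0l.
have e1 : dv e one = 0.
  by rewrite one_sum dv_sumr big1 // => i _; rewrite eq0.
have ez : dv e (zz x0) = 0.
  by rewrite /zz dv_sumr big1 // => i _; rewrite dvZr eq0 mulr0.
set d := dv e e.
have dpos : 0 < d by apply: dv_gt0.
set a := - hh x0 / (ev i0 * d).
have a0 : 0 <= a.
  have -> : a = (- (ev i0 * hh x0)) / (ev i0 ^+ 2 * d).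
    by rewrite /a; field; rewrite evn0 gt_eqF.
  by apply: divr_ge0; [rewrite oppr_ge0 | apply: mulr_ge0; [apply: sqr_ge0 | apply: ltW]].
set t := Num.sqrt a.
have tt : t ^+ 2 = a by rewrite sqr_sqrtr.
set v := zz x0 + t *: e.
have eM : e *m MM x0 = 0.
  rewrite /MM mulmxBr mulmx1 -scalemxAr eA scalerA -{1}(scale1r e) -scalerBl.
  by rewrite mulrC e0 scale0r.
have vM : v *m MM x0 = one by rewrite mulmxDl zzM // -scalemxAl eM scaler0 addr0.
have vA : dv (v *m A) v = 0.
  rewrite /v mulmxDl dvDl !dvDr dv_zzA (dv_sym _ _ sA) -scalemxAl eA.
  rewrite !dvZl !dvZr ez.
  have -> : hh x0 = - (ev i0 * dv e e * t ^+ 2).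
    by rewrite tt /a /d; field; rewrite evn0 gt_eqF.
  ring.
have Sv : dv one v = dv v v by rewrite -{1}vM dvMM vA mulr0 subr0.
exists v; split => //.
by rewrite -Sv /v dvDr dv_one_zz dvZr dvC e1 mulr0 addr0.
Qed.


Lemma near_pole i0 : w i0 != 0 -> ev i0 != 0 -> (forall i : 'I_r, ev i0 * ev i <= ev i0 ^+ 2) ->
  exists x, [/\ 0 <= ev i0 * x, ev i0 * x < 1 & 0 < ev i0 * hh x].
Proof.
move=> wn0 Ln0 ext.
set L := ev i0.
set K := \sum_i `|L * ev i| * w i.
have K0 : 0 <= K by apply: sumr_ge0 => i _; apply: mulr_ge0 => //; apply: w_ge0.
have w0p : 0 < w i0 by rewrite lt_def wn0 w_ge0.
have L2 : 0 < L ^+ 2 by rewrite lt_def sqrf_eq0 Ln0 sqr_ge0.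
set p := L ^+ 2 * w i0.
have p0 : 0 < p by apply: mulr_gt0.
set del := p / (p + K + 1).
have pK : 0 < p + K + 1 by lra.
have d0 : 0 < del by apply: divr_gt0.
have d1 : del < 1 by rewrite /del ltr_pdivrMr // mul1r; lra.
set x := (1 - del) / L.
have Lx : L * x = 1 - del by rewrite /x; field.
exists x; split; [by rewrite Lx; lra | by rewrite Lx; lra | ].
have ci0 : c x i0 = del^-1 by rewrite /c -/L Lx opprB addrC subrK.
have term : forall i : 'I_r, - (`|L * ev i| * w i) <= L * (ev i * w i * c x i ^+ 2).
  move=> i; have wi := w_ge0 i.
  have [h|h] := leP 0 (L * ev i).
    have : 0 <= L * ev i * w i * c x i ^+ 2.
      by apply: mulr_ge0; [apply: mulr_ge0 | apply: sqr_ge0].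
    have : 0 <= `|L * ev i| * w i by apply: mulr_ge0.
    rewrite !mulrA; lra.
  have ex : ev i * x = (L * ev i) * (1 - del) / L ^+ 2.
    by rewrite /x; field.
  have ex0 : ev i * x <= 0.
    rewrite ex; apply: mulr_le0_ge0; last by rewrite invr_ge0 ltW.
    apply: mulr_le0_ge0; lra.
  have y1 : 1 <= 1 - ev i * x by lra.
  have cp : 0 < c x i by rewrite /c invr_gt0; lra.
  have c1 : c x i <= 1 by rewrite /c invf_le1 //; lra.
  have c2 : c x i ^+ 2 <= 1 by rewrite expr2; nra.
  rewrite ltr0_norm // !mulrA mulNr opprK.
  have u0 : L * ev i * w i <= 0 by apply: mulr_le0_ge0 => //; apply: ltW.
  move: u0 c2; rewrite expr2; move: (L * ev i * w i) (c x i) => u C u0 c2.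
  rewrite -subr_ge0 (_ : u * C * C - u = (- u) * (1 - C * C)); last by ring.
  by apply: mulr_ge0; lra.
rewrite /hh mulr_sumr (bigD1 i0) //= ci0.
have rest : - K <= \sum_(i | i != i0) L * (ev i * w i * c x i ^+ 2).
  apply: le_trans (_ : - \sum_(i | i != i0) `|L * ev i| * w i <= _).
    rewrite lerN2 /K [leRHS](bigD1 i0) //= lerDr; apply: mulr_ge0 => //; apply: w_ge0.
  by rewrite -sumrN; apply: ler_sum => i _; apply: term.
have big : K < L * (L * w i0 * del^-1 ^+ 2).
  have -> : L * (L * w i0 * del^-1 ^+ 2) = p / del ^+ 2 by rewrite /p; field; rewrite gt_eqF.
  have : p / del <= p / del ^+ 2.
    rewrite -subr_ge0 (_ : p / del ^+ 2 - p / del = p * (1 - del) / del ^+ 2); last first.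
      by field; rewrite gt_eqF.
    by apply: divr_ge0; [apply: mulr_ge0; lra | apply: sqr_ge0].
  have -> : p / del = p + K + 1.
    by rewrite /del invf_div mulrCA mulfV ?mulr1 // gt_eqF.
  lra.
rewrite -/L; lra.
Qed.


Lemma ivt_h a b : a <= b ->
  (forall x, a <= x <= b -> forall i, w i != 0 -> 0 < 1 - ev i * x) ->
  hh a <= 0 -> 0 <= hh b -> exists2 x, a <= x <= b & hh x = 0.
Proof.
move=> ab pos ha hb.
pose Hp : {poly R} := \sum_(i < r) (ev i * w i) *:
   \prod_(j < r | (w j != 0) && (j != i)) (1 - ev j *: 'X) ^+ 2.
pose D x := \prod_(j < r | w j != 0) (1 - ev j * x) ^+ 2.
have HpE : forall x, a <= x <= b -> Hp.[x] = hh x * D x.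
  move=> x hx; rewrite /Hp horner_sum /hh mulr_suml; apply: eq_bigr => i _.
  rewrite hornerZ horner_prod.
  have [w0|wn0] := eqVneq (w i) 0; first by rewrite w0 !mulr0 !mul0r.
  rewrite /D [in RHS](bigD1 i) //= -!mulrA; congr (_ * (_ * _)).
  set P := \prod_(_ < r | _) (1 - _ * x) ^+ 2.
  have cc : c x i * (1 - ev i * x) = 1 by rewrite /c mulVf // gt_eqF // pos.
  rewrite (_ : c x i * (c x i * ((1 - ev i * x) * ((1 - ev i * x) * P))) =
     (c x i * (1 - ev i * x)) ^+ 2 * P); last by ring.
  rewrite cc expr1n mul1r /P.
  by apply: eq_bigr => j _; rewrite !hornerE.
have Dpos : forall x, a <= x <= b -> 0 < D x.
  move=> x hx; apply: prodr_gt0 => j wj.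
  by rewrite lt_def sqr_ge0 andbT sqrf_eq0 gt_eqF // pos.
have aa : a <= a <= b by rewrite lexx ab.
have bb : a <= b <= b by rewrite lexx ab.
have hab : Hp.[a] * Hp.[b] <= 0.
  rewrite (HpE _ aa) (HpE _ bb).
  have := Dpos _ aa; have := Dpos _ bb.
  move: (D a) (D b) => da db da0 db0.
  rewrite (_ : hh a * da * (hh b * db) = (hh a * hh b) * (da * db)); last by ring.
  apply: mulr_le0_ge0; last by apply: mulr_ge0; apply: ltW.
  exact: mulr_le0_ge0.
have [x hx rx] := polyrcf.poly_ivt ab hab.
move: hx; rewrite in_itv /= => hx.
exists x => //.
move: rx; rewrite /root (HpE _ hx) mulf_eq0 => /orP [/eqP //|].
by rewrite gt_eqF // Dpos.
Qed.


Lemma key_lt (L e x : R) : L != 0 -> L * e <= L ^+ 2 -> 0 <= L * x <= 1 ->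
  (L * e < L ^+ 2 \/ L * x < 1) -> e * x < 1.
Proof.
move=> Ln0 le /andP [x0 x1] h.
have L2 : 0 < L ^+ 2 by rewrite lt_def sqrf_eq0 Ln0 sqr_ge0.
have -> : e * x = (L * e) * (L * x) / L ^+ 2 by field.
rewrite ltr_pdivrMr // mul1r.
move: le x0 x1 h L2; move: (L * e) (L * x) (L ^+ 2) => a b l.
move=> le x0 x1 [h|h] l0.
  have [ha|ha] := leP a 0.
    have : a * b <= 0 by apply: mulr_le0_ge0.
    lra.
  have : a * b <= a by rewrite ler_piMr // ltW.
  lra.
have : a * b <= l * b by rewrite ler_wpM2r.
have : l * b < l by rewrite gtr_pMr.
lra.
Qed.

Lemma side (i0 : 'I_r) : ev i0 != 0 -> (forall i : 'I_r, ev i0 * ev i <= ev i0 ^+ 2) ->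
  (fin (ev i0)^-1 /\ exists v,
     [/\ dv one v = dv v v, dv (v *m A) v = 0 & dv v v = ff (ev i0)^-1])
  \/ (exists y, [/\ 0 <= ev i0 * y <= 1, 0 < ev i0 * hh y &
        forall x, 0 <= ev i0 * x <= ev i0 * y -> forall i, w i != 0 -> 0 < 1 - ev i * x]).
Proof.
move=> Ln0 ext.
set L := ev i0.
have [w0|wn0] := eqVneq (w i0) 0.
  have strict : forall i, w i != 0 -> L * ev i < L ^+ 2.
    move=> i wi; rewrite lt_def ext andbT; apply: contraNneq wi => h.
    have -> : i = i0.
      apply/eqP; rewrite -ev_inj; apply/eqP; apply: (mulfI Ln0).
      by rewrite -/L -h expr2.
    by rewrite w0.
  have LL : L * L^-1 = 1 by rewrite mulfV.
  have posx : forall x, 0 <= L * x <= 1 -> forall i, w i != 0 -> 0 < 1 - ev i * x.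
    move=> x hx i wi; rewrite subr_gt0; apply: (key_lt Ln0 (ext i) hx).
    by left; apply: strict.
  have fx : fin L^-1.
    by move=> i wi; rewrite gt_eqF // posx // LL lexx ler01.
  have [hle|hgt] := leP (L * hh L^-1) 0.
    left; split => //; apply: (endpoint w0) => //.
    by rewrite -/L LL subrr.
  right; exists L^-1; split => //; first by rewrite LL lexx ler01.
  move=> x /andP [x0 x1]; apply: posx; rewrite x0 /=; rewrite LL in x1; exact: x1.
have [y [y0 y1 hy]] := near_pole wn0 Ln0 ext.
right; exists y; split => //; first by rewrite y0 ltW.
move=> x /andP [x0 x1] i wi; rewrite subr_gt0; apply: (key_lt Ln0 (ext i)).
  by rewrite x0 /=; apply: le_trans x1 (ltW y1).
by right; apply: le_lt_trans x1 y1.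
Qed.


Lemma ex_max : (0 < r)%N -> exists imax : 'I_r, forall i : 'I_r, ev i <= ev imax.
Proof.
move=> r0; pose i0 := Ordinal r0.
case: (@arg_maxP _ _ _ i0 xpredT (fun i => ev i) isT) => j _ Hj.
by exists j => i; apply: Hj.
Qed.

Lemma ex_min : (0 < r)%N -> exists imin : 'I_r, forall i : 'I_r, ev imin <= ev i.
Proof.
move=> r0; pose i0 := Ordinal r0.
case: (@arg_minP _ _ _ i0 xpredT (fun i => ev i) isT) => j _ Hj.
by exists j => i; apply: Hj.
Qed.

Lemma r_pos (u : 'rV[R]_n) : dv (u *m A) u != 0 -> (0 < r)%N.
Proof.
rewrite dvA_sum; case: (posnP r) => // r0.
by rewrite big1 ?eqxx // => -[i ir] _; exfalso; move: ir; rewrite r0.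
Qed.

Lemma max_pos (imax : 'I_r) (u : 'rV[R]_n) : (forall i : 'I_r, ev i <= ev imax) -> 0 < dv (u *m A) u -> 0 < ev imax.
Proof.
move=> Hm; rewrite dvA_sum => h; rewrite ltNge; apply/negP => hle.
suff : \sum_(i < r) ev i * dv (u *m PP i) (u *m PP i) <= 0 by rewrite leNgt h.
apply: sumr_le0 => i _; apply: mulr_le0_ge0; first exact: le_trans (Hm i) hle.
exact: dv_ge0.
Qed.

Lemma min_neg (imin : 'I_r) (u : 'rV[R]_n) : (forall i : 'I_r, ev imin <= ev i) -> dv (u *m A) u < 0 -> ev imin < 0.
Proof.
move=> Hm; rewrite dvA_sum => h; rewrite ltNge; apply/negP => hge.
suff : 0 <= \sum_(i < r) ev i * dv (u *m PP i) (u *m PP i) by rewrite leNgt h.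
apply: sumr_ge0 => i _; apply: mulr_ge0; first exact: le_trans hge (Hm i).
exact: dv_ge0.
Qed.

Lemma range_psd (imin imax : 'I_r) x : (forall i : 'I_r, ev imin <= ev i) -> (forall i : 'I_r, ev i <= ev imax) ->
  ev imin < 0 -> 0 < ev imax -> (ev imin)^-1 <= x <= (ev imax)^-1 ->
  forall i : 'I_r, 0 <= 1 - ev i * x.
Proof.
move=> Hmin Hmax mn mx /andP [ax xb] i; rewrite subr_ge0.
have [x0|x0] := leP 0 x.
  apply: le_trans (_ : ev imax * x <= 1); first by rewrite ler_wpM2r.
  by rewrite -(mulfV (lt0r_neq0 mx)) ler_wpM2l // ltW.
apply: le_trans (_ : ev imin * x <= 1); first by rewrite ler_wnM2r ?Hmin // ltW.
by rewrite -(mulfV (ltr0_neq0 mn)) ler_wnM2l // ltW.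
Qed.

Lemma main_abs (imin imax : 'I_r) : (forall i : 'I_r, ev imin <= ev i) -> (forall i : 'I_r, ev i <= ev imax) ->
  ev imin < 0 -> 0 < ev imax ->
  exists x, [/\ (ev imin)^-1 <= x <= (ev imax)^-1, fin x &
    exists v, [/\ dv one v = dv v v, dv (v *m A) v = 0 & dv v v = ff x]].
Proof.
move=> Hmin Hmax mn mx.
have amn : (ev imin)^-1 < 0 by rewrite invr_lt0.
have bmx : 0 < (ev imax)^-1 by rewrite invr_gt0.
have extmin : forall i : 'I_r, ev imin * ev i <= ev imin ^+ 2.
  by move=> i; rewrite expr2 ler_nM2l.
have extmax : forall i : 'I_r, ev imax * ev i <= ev imax ^+ 2.
  by move=> i; rewrite expr2 ler_pM2l.
case: (side (ltr0_neq0 mn) extmin) => [[fx [v hv]]|[ym [ym0 hym posm]]].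
  exists (ev imin)^-1; split => //; last by exists v.
  by apply/andP; split; [exact: le_refl | exact: ltW (lt_trans amn bmx)].
case: (side (lt0r_neq0 mx) extmax) => [[fx [v hv]]|[yp [yp0 hyp posp]]].
  exists (ev imax)^-1; split => //; last by exists v.
  by apply/andP; split; [exact: ltW (lt_trans amn bmx) | exact: le_refl].
have ymle : ym <= 0.
  by case/andP: ym0; rewrite nmulr_rge0.
have ypge : 0 <= yp.
  by case/andP: yp0; rewrite pmulr_rge0.
have hm : hh ym <= 0 by move: hym; rewrite nmulr_rgt0 // => /ltW.
have hp : 0 <= hh yp by move: hyp; rewrite pmulr_rgt0 // => /ltW.
have pos : forall x, ym <= x <= yp -> forall i, w i != 0 -> 0 < 1 - ev i * x.
  move=> x /andP [x1 x2]; have [x0|x0] := leP x 0.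
    by apply: posm; rewrite nmulr_rge0 // x0 ler_nM2l.
  by apply: posp; rewrite pmulr_rge0 // (ltW x0) /= ler_pM2l.
have [x hx hx0] := ivt_h (le_trans ymle ypge) pos hm hp.
have fx : fin x by move=> i wi; rewrite gt_eqF // pos.
exists x; split => //; last exact: strong_int.
case/andP: hx => x1 x2; apply/andP; split.
  apply: le_trans x1; case/andP: ym0 => _.
  by rewrite -(mulfV (ltr0_neq0 mn)) ler_nM2l.
apply: le_trans x2 _; case/andP: yp0 => _.
by rewrite -(mulfV (lt0r_neq0 mx)) ler_pM2l.
Qed.

End Opt.


Local Open Scope classical_set_scope.
Local Open Scope ring_scope.

Section Glue.
Variable R : realType.
Variables (n : nat) (A : 'M[R]_n).
Hypothesis sA : A^T = A.
Local Notation r := (size (spec A)).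

Lemma quadfE v : quadf A v = dv (v *m A) v.
Proof. by rewrite /quadf sA dvC. Qed.

Lemma spectrumE l : spectrum A l <-> exists i : 'I_r, l = ev i.
Proof.
split; first exact: eig_ev.
by move=> [i ->]; exact: ev_eig.
Qed.

Lemma wcoefE (i : 'I_r) : wcoef A (ev i) = w i.
Proof. by rewrite /wcoef (_ : eigenproj A (ev i) = PP i) // PP_tr. Qed.

Lemma fsumE x : \sum_(l \in [set l | spectrum A l /\ wcoef A l != 0])
          (wcoef A l / (1 - l * x)) = ff A x.
Proof.
rewrite (fsbig_widen _ [set` spec A]); last first.
- move=> l [/= ls]; rewrite (mem_spec A) in ls.
  move/not_andP => [//|/negP]; rewrite negbK => /eqP ->; by rewrite mul0r.
- by move=> l [sl _] /=; rewrite (mem_spec A).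
rewrite -fsbig_seq ?spec_uniq // (big_nth 0) big_mkord.
by apply: eq_bigr => i _; rewrite -/(ev i) wcoefE.
Qed.

Lemma W_fin x : fin A x -> W_A A x = (ff A x)%:E.
Proof.
move=> fx; rewrite /W_A; destruct (pselect _) as [H|H]; last by rewrite /= fsumE.
exfalso; case: H => l [sl [wl el]]; have [i li] := (spectrumE l).1 sl; subst l.
by move: (fx i); rewrite -wcoefE el eqxx => /(_ wl).
Qed.

Lemma W_pole x : ~ fin A x -> W_A A x = +oo%E.
Proof.
move=> nf; rewrite /W_A; destruct (pselect _) as [H|nex] => //; exfalso; apply: nf => i wi.
apply/eqP => e; apply: nex; exists (ev i); split; first by apply/spectrumE; exists i.
by rewrite wcoefE.
Qed.

Lemma lam_maxE (imax : 'I_r) : (forall i : 'I_r, ev i <= ev imax) -> lam_max A = ev imax.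
Proof.
move=> Hm; have ub : ubound (spectrum A) (ev imax).
  by move=> y /spectrumE [i ->].
have sm : spectrum A (ev imax) by apply/spectrumE; exists imax.
rewrite /lam_max; apply/eqP; rewrite eq_le; apply/andP; split.
  by apply: ge_sup => //; exists (ev imax).
by apply: ub_le_sup => //; exists (ev imax).
Qed.

Lemma lam_minE (imin : 'I_r) : (forall i : 'I_r, ev imin <= ev i) -> lam_min A = ev imin.
Proof.
move=> Hm; have lb : lbound (spectrum A) (ev imin).
  by move=> y /spectrumE [i ->].
have sm : spectrum A (ev imin) by apply/spectrumE; exists imin.
rewrite /lam_min; apply/eqP; rewrite eq_le; apply/andP; split.
  by apply: ge_inf => //; exists (ev imin).
by apply: lb_le_inf => //; exists (ev imin).
Qed.

End Glue.

Section Final.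
Variable R : realType.
Variable n : nat.

Lemma dv_one_one : dv (one R n) (one R n) = n%:R.
Proof.
rewrite /dv mxE (eq_bigr (fun _ => 1)) => [|i _]; last by rewrite !mxE mulr1.
by rewrite sumr_const card_ord.
Qed.

Lemma dvAdelta (A : 'M[R]_n) i j : dv (delta_mx 0 i *m A) (delta_mx 0 j) = A i j.
Proof. by rewrite /dv -rowE trmx_delta -colE !mxE. Qed.

Lemma per_A (A : 'M[R]_n) : A^T = A -> (forall i, A i i = 0) ->
  ereal_sup [set (dotv v v)%:E | v in [set v | S_set v /\ quadf A v = 0]] = inner_min A.
Proof.
move=> sA dA; rewrite /inner_min; case: eqP => [A0|/eqP An0].
  apply/eqP; rewrite eq_le; apply/andP; split.
    apply: ge_ereal_sup => _ [v [Sv _] <-]; rewrite lee_fin.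
    change (dv (one R n) v = dv v v) in Sv; change (dv v v <= n%:R).
    have := dv_ge0 (v - one R n); rewrite dvBl !dvBr dv_one_one (dvC v (one R n)) Sv.
    lra.
  apply: ereal_sup_ubound; exists (one R n); last by change ((dv (one R n) (one R n))%:E = n%:R%:E); rewrite dv_one_one.
  by split => //; rewrite A0 /quadf trmx0 mulmx0 /dotv trmx0 mulmx0 mxE.
have [[i [j Aij]]|H] := pselect (exists i j, A i j != 0); last first.
  exfalso; move/eqP: An0; apply; apply/matrixP => i j; rewrite mxE; apply/eqP.
  by apply: contra_notT H => h; exists i, j.
have ij : i != j by apply: contraNneq Aij => ->; rewrite dA.
have Aji : A j i = A i j by rewrite -{1}sA mxE.
pose up : 'rV[R]_n := delta_mx 0 i + delta_mx 0 j.
pose um : 'rV[R]_n := delta_mx 0 i - delta_mx 0 j.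
have qp : dv (up *m A) up = 2 * A i j.
  by rewrite /up mulmxDl dvDl !dvDr !dvAdelta dA dA Aji; ring.
have qm : dv (um *m A) um = - (2 * A i j).
  by rewrite /um mulmxBl dvBl !dvBr !dvAdelta dA dA Aji; ring.
have [u [hpos [u' hneg]]] : exists u : 'rV[R]_n, 0 < dv (u *m A) u /\ exists u' : 'rV[R]_n, dv (u' *m A) u' < 0.
  have [h|h] := ltP 0 (A i j).
    exists up; split; first by rewrite qp mulr_gt0.
    by exists um; rewrite qm oppr_lt0 mulr_gt0.
  have h' : A i j < 0 by rewrite lt_def eq_sym Aij h.
  exists um; split; first by rewrite qm oppr_gt0 pmulr_rlt0.
  by exists up; rewrite qp pmulr_rlt0.
have r0 := r_pos sA (lt0r_neq0 hpos).
have [imax Hmax] := ex_max r0.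
have [imin Hmin] := ex_min r0.
have mx := max_pos sA Hmax hpos.
have mn := min_neg sA Hmin hneg.
rewrite (lam_minE Hmin) (lam_maxE Hmax).
apply/eqP; rewrite eq_le; apply/andP; split.
  apply: ge_ereal_sup => _ [v [Sv Qv] <-]; apply: le_ereal_inf_tmp => _ [x hx <-].
  have [fx|fx] := pselect (fin A x); last by rewrite W_pole // leey.
  rewrite W_fin // lee_fin; change (dv v v <= ff A x).
  apply: (weak sA (range_psd Hmin Hmax mn mx hx) fx); first exact: Sv.
  by rewrite -(quadfE sA).
have [x [hx fx [v [Sv Qv vv]]]] := main_abs sA Hmin Hmax mn mx.
apply: le_trans (_ : W_A A x <= _)%E; first by apply: ereal_inf_lbound; exists x.
rewrite W_fin // -vv; apply: ereal_sup_ubound; exists v => //; split => //.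
by rewrite (quadfE sA).
Qed.

End Final.

Theorem lemma2 (R : realType) (n : nat) (adj : rel 'I_n) :
  simple_graph adj ->
  alpha_S R adj =
  ereal_inf [set inner_min A | A in [set A : 'M[R]_n | weighted_adj adj A]].
Proof.
move=> _; rewrite /alpha_S; congr ereal_inf; apply: eq_imagel => A [sA [dA _]].
exact: per_A.
Qed.
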